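(* Let $S=\{\rho_1=0<\rho_2<\cdots\}$ be a numerical semigroup. For a positive integer $d$ let $S_d=\{\rho\in S:\ \#A[\rho]=d\}$. The following are equivalent: (a) $\#A[2\rho_i]=2i-1$ for every positive integer $i$; (b) $\#S_d=1$ for every odd positive integer $d$; (c) $S$ is an Arf semigroup.
   Context: A numerical semigroup is a submonoid $S$ of $(\mathbb{N}_0,+)$ with finite complement, with elements listed increasingly. $S$ is Arf if $\rho_i+\rho_j-\rho_k\in S$ for all positive integers $i\ge j\ge k$. For $\rho\in S$, $A[\rho]=\{p\in S:\ \rho-p\in S\}$. *)

(* Defs.v *)
From mathcomp Require Import all_boot.
Set Implicit Arguments. Unset Strict Implicit. Unset Printing Implicit Defensive.

Definition numerical_semigroup (S : pred nat) : Prop :=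
  [/\ S 0,
      (forall a b, S a -> S b -> S (a + b)) &
      exists c, forall n, c <= n -> S n].

Definition cnt_below (S : pred nat) (x : nat) : nat := count S (iota 0 x).

(* is_rho S i x : x is the i-th element rho_i of S listed increasingly
   (1-indexed, so rho_1 = 0): x is in S and exactly i-1 elements of S
   are smaller than x. *)
Definition is_rho (S : pred nat) (i x : nat) : Prop :=
  S x /\ cnt_below S x = i.-1.

(* #A[r] where A[r] = {p in S : r - p in S}; such p satisfy 0 <= p <= r. *)
Definition cardA (S : pred nat) (r : nat) : nat :=
  count (fun p => S p && S (r - p)) (iota 0 r.+1).

Definition Arf (S : pred nat) : Prop :=
  forall i j k x y z, 0 < k -> k <= j -> j <= i ->
    is_rho S i x -> is_rho S j y -> is_rho S k z -> S (x + y - z).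

(* Main.v *)
Require Import Defs.
From mathcomp Require Import all_boot zify.

Lemma count_sym (P : pred nat) (r : nat) :
  (forall p, p <= r -> P (r - p) = P p) ->
  forall k, 2 * k <= r.+1 ->
  count P (iota 0 r.+1) = 2 * count P (iota 0 k) + count P (iota k (r.+1 - 2 * k)).
Proof.
move=> Hs; elim=> [|k IH] Hk.
  by rewrite muln0 subn0.
rewrite IH; last lia.
have [n Hn] : exists n, r.+1 - 2 * k = n.+2 by exists (r.+1 - 2 * k).-2; lia.
have -> : r.+1 - 2 * k.+1 = n by lia.
have E1 : iota k n.+2 = k :: (iota k.+1 n ++ [:: k.+1 + n]).
  by have := iotaD k.+1 n 1; rewrite addn1 /= => ->.
have E2 : iota 0 k.+1 = iota 0 k ++ [:: k].
  by have := iotaD 0 k 1; rewrite addn1 /= => ->.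
rewrite Hn E1 E2 !count_cat /= count_cat /=.
have -> : k.+1 + n = r - k by lia.
rewrite Hs; last lia.
lia.
Qed.


Definition C (S : pred nat) x := count (fun p => S p && S (2 * x - p)) (iota 0 x).
Definition N (S : pred nat) x := cnt_below S x.

Lemma cardA_even (S : pred nat) x : cardA S (2 * x) = 2 * C S x + S x.
Proof.
have Hs : forall p, p <= 2 * x -> (fun p => S p && S (2 * x - p)) (2 * x - p) = (fun p => S p && S (2 * x - p)) p.
  by move=> p Hp /=; rewrite subKn // andbC.
rewrite /cardA (@count_sym _ _ Hs x); last lia.
have -> : (2 * x).+1 - 2 * x = 1 by lia.
rewrite /= addn0 /C; have -> : 2 * x - x = x by lia.
by rewrite andbb.
Qed.

Lemma cardA_odd (S : pred nat) x : cardA S (2 * x).+1 = 2 * count (fun p => S p && S ((2 * x).+1 - p)) (iota 0 x.+1).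
Proof.
have Hs : forall p, p <= (2 * x).+1 -> (fun p => S p && S ((2 * x).+1 - p)) ((2 * x).+1 - p) = (fun p => S p && S ((2 * x).+1 - p)) p.
  by move=> p Hp /=; rewrite subKn // andbC.
rewrite /cardA (@count_sym _ _ Hs x.+1); last lia.
have -> : (2 * x).+2 - 2 * x.+1 = 0 by lia.
by rewrite /= addn0.
Qed.

Lemma odd_card (S : pred nat) r : odd (cardA S r) -> exists x, r = 2 * x /\ S x.
Proof.
have := odd_double_half r; case: (odd r) => /= Hr.
  rewrite -Hr -mul2n add1n cardA_odd mul2n odd_double //.
rewrite add0n in Hr; rewrite -Hr -mul2n cardA_even mul2n oddD odd_double /=.
by case HS: (S _) => // _; exists r./2.
Qed.

Lemma count_and (a b : pred nat) s : count (fun p => a p && b p) s <= count a s.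
Proof. elim: s => //= x s IH; case: (a x); case: (b x) => /=; lia. Qed.

Lemma count_and_eq (a b : pred nat) s :
  count (fun p => a p && b p) s = count a s -> forall p, p \in s -> a p -> b p.
Proof.
elim: s => //= x s IH H p; rewrite inE => /orP [/eqP ->|Hp].
  by case: (a x) H; case: (b x) => //=; have := count_and a b s; lia.
apply: IH => //; move: H; have := count_and a b s.
case: (a x); case: (b x) => /=; lia.
Qed.

Lemma count_and_eq2 (a b : pred nat) s :
  (forall p, p \in s -> a p -> b p) -> count (fun p => a p && b p) s = count a s.
Proof.
elim: s => //= x s IH H; rewrite IH; last by move=> p Hp; apply: H; rewrite inE Hp orbT.
by case Ha: (a x) => //=; rewrite H // inE eqxx.
Qed.

Lemma C_le (S : pred nat) x : C S x <= N S x.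
Proof. exact: count_and. Qed.

Lemma C_eq (S : pred nat) x : C S x = N S x <-> forall p, p < x -> S p -> S (2 * x - p).
Proof.
split.
  move=> H p Hp; apply: (@count_and_eq S (fun p => S (2 * x - p)) (iota 0 x) H).
  by rewrite mem_iota.
move=> H; apply: (@count_and_eq2 S (fun p => S (2 * x - p)) (iota 0 x)) => p; rewrite mem_iota => /andP [_ Hp]; exact: H.
Qed.

Lemma N_exists (S : pred nat) n k : k < count S (iota 0 n) -> exists y, [/\ y < n, S y & N S y = k].
Proof.
elim: n => [//|n IH].
have := iotaD 0 n 1; rewrite addn1 => ->; rewrite count_cat /= addn0 add0n => Hk.
have [Hlt|Hge] := ltnP k (count S (iota 0 n)).
  by have [y [H1 H2 H3]] := IH Hlt; exists y; split => //; lia.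
case HSn: (S n) Hk => /= Hk; last lia.
by exists n; split => //; rewrite /N /cnt_below; lia.
Qed.

Lemma N_mono (S : pred nat) y x : y <= x -> N S y <= N S x.
Proof.
move=> H; rewrite /N /cnt_below -(subnKC H) iotaD count_cat; lia.
Qed.

Lemma N_smono (S : pred nat) y x : y < x -> S y -> N S y < N S x.
Proof.
move=> H Hy; rewrite /N /cnt_below -(subnKC H) iotaD count_cat.
have := iotaD 0 y 1; rewrite addn1 => ->; rewrite count_cat /= Hy; lia.
Qed.

Lemma N_inj (S : pred nat) x y : S x -> S y -> N S x = N S y -> x = y.
Proof.
move=> Hx Hy H; case: (ltngtP x y) => // Hxy.
  by have := @N_smono S x y Hxy Hx; lia.
by have := @N_smono S y x Hxy Hy; lia.
Qed.

Lemma rho_le (S : pred nat) i j x y : 0 < j -> j <= i -> is_rho S i x -> is_rho S j y -> y <= x.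
Proof.
move=> Hj Hji [Hx Nx] [Hy Ny]; rewrite leqNgt; apply/negP => Hxy.
have := @N_smono S x y Hxy Hx; rewrite /N Nx Ny; lia.
Qed.


Definition A_prop (S : pred nat) := forall i x, 0 < i -> is_rho S i x -> cardA S (2 * x) = (2 * i).-1.
Definition B_prop (S : pred nat) := forall d, 0 < d -> odd d -> exists! r, S r /\ cardA S r = d.
Definition D_prop (S : pred nat) := forall x y, S x -> S y -> y <= x -> S (2 * x - y).
Definition A'_prop (S : pred nat) := forall x, S x -> C S x = N S x.

Lemma A_iff (S : pred nat) : A_prop S <-> A'_prop S.
Proof.
split.
- move=> HA x Sx; have := HA (N S x).+1 x (ltn0Sn _) (conj Sx erefl).
  rewrite cardA_even Sx; lia.
- move=> H i x Hi [Sx Nx]; rewrite cardA_even Sx (H x Sx) /N Nx; lia.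
Qed.

Lemma A'_iff (S : pred nat) : A'_prop S <-> D_prop S.
Proof.
split.
- move=> H x y Sx Sy; rewrite leq_eqVlt => /orP [/eqP ->|ylt].
    by have -> : 2 * x - x = x by lia.
  exact: (proj1 (C_eq S x) (H x Sx) y ylt Sy).
- move=> HD x Sx; apply/C_eq => p Hp Sp; apply: HD => //; lia.
Qed.

Lemma D_arf (S : pred nat) : D_prop S -> forall e x y z, S x -> S y -> S z ->
  z <= y -> y <= x -> y - z = e -> S (x + y - z).
Proof.
move=> HD; elim/ltn_ind => e IH x y z Sx Sy Sz zy yx He.
case: (posnP e) => [e0|epos].
  by have -> : x + y - z = x by lia.
have prog : forall j, S (z + j * e) /\ S (z + j.+1 * e).
  elim=> [|j [IH1 IH2]].
    by rewrite mul0n addn0 mul1n; split => //; have -> : z + e = y by lia.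
  split => //.
  have -> : z + j.+2 * e = 2 * (z + j.+1 * e) - (z + j * e) by rewrite !mulSn; lia.
  apply: HD => //; rewrite mulSn; lia.
have Hd := divn_eq (x - z) e.
have Hr := ltn_pmod (x - z) epos.
have [S1 S2] := prog ((x - z) %/ e).
have := IH _ Hr (z + ((x - z) %/ e).+1 * e) x (z + (x - z) %/ e * e) S2 Sx S1.
rewrite mulSn.
move: Hd Hr; set q := (x - z) %/ e * e; set r := (x - z) %% e => Hd Hr H.
have -> : x + y - z = z + (e + q) + x - (z + q) by lia.
apply: H; lia.
Qed.

Lemma arf_iff (S : pred nat) : Arf S <-> D_prop S.
Proof.
split.
- move=> HA x y Sx Sy yx.
  have := HA (N S x).+1 (N S x).+1 (N S y).+1 x x y (ltn0Sn _).
  rewrite ltnS (@N_mono S y x yx) leqnn => /(_ erefl erefl (conj Sx erefl) (conj Sx erefl) (conj Sy erefl)).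
  by have -> : x + x - y = 2 * x - y by lia.
- move=> HD i j k x y z Hk Hkj Hji Rx Ry Rz.
  have yx := @rho_le S i j x y (leq_trans Hk Hkj) Hji Rx Ry.
  have zy := @rho_le S j k y z Hk Hkj Ry Rz.
  case: Rx Ry Rz => [Sx _] [Sy _] [Sz _].
  exact: (@D_arf S HD (y - z) x y z Sx Sy Sz zy yx erefl).
Qed.

Lemma N_all (S : pred nat) : numerical_semigroup S -> forall k, exists y, S y /\ N S y = k.
Proof.
case=> S0 Sadd [c Hc] k.
have Hall : forall m c', c <= c' -> count S (iota c' m) = m.
  by elim=> // m IHm c' Hc' /=; rewrite Hc // (IHm c'.+1 (leqW Hc')).
have : k < count S (iota 0 (c + k.+1)).
  rewrite iotaD count_cat add0n (Hall k.+1 c) //; lia.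
move/(@N_exists S) => [y [_ Sy Ny]]; by exists y.
Qed.

Lemma B_iff (S : pred nat) : numerical_semigroup S -> (B_prop S <-> A'_prop S).
Proof.
move=> HS; have HS' := HS; case: HS' => S0 Sadd _.
split.
- move=> HB; elim/ltn_ind => x IH Sx.
  have := C_le S x; rewrite leq_eqVlt => /orP [/eqP //|Hlt].
  exfalso.
  have [y [yx Sy Ny]] := @N_exists S x (C S x) Hlt.
  have Cy := IH y yx Sy.
  have Hodd : odd (2 * C S x).+1 by rewrite -addn1 oddD mul2n odd_double.
  have [r [_ Hu]] := HB _ (ltn0Sn _) Hodd.
  have Ex := Hu (2 * x); have Ey := Hu (2 * y).
  have E1 : r = 2 * x.
    apply: Ex; split; first by rewrite mul2n -addnn; exact: Sadd.
    by rewrite cardA_even Sx addn1.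
  have E2 : r = 2 * y.
    apply: Ey; split; first by rewrite mul2n -addnn; exact: Sadd.
    by rewrite cardA_even Sy Cy Ny addn1.
  lia.
- move=> HA d dpos dodd.
  have Hd := odd_double_half d; rewrite dodd in Hd.
  have [y [Sy Ny]] := @N_all S HS d./2.
  exists (2 * y); split.
    split; first by rewrite mul2n -addnn; exact: Sadd.
    rewrite cardA_even Sy (HA y Sy) Ny -Hd; lia.
  move=> r' [Sr' Hr'].
  have [x' [E Sx']] : exists x, r' = 2 * x /\ S x by apply: (@odd_card S); rewrite Hr'.
  subst r'.
  move: Hr'; rewrite cardA_even Sx' (HA x' Sx') => Hr'.
  have : N S x' = N S y by lia.
  by move/(@N_inj S x' y Sx' Sy) ->.
Qed.

Theorem mainTheorem12 (S : pred nat) (HS : numerical_semigroup S) :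
  [/\ ((forall i x, 0 < i -> is_rho S i x -> cardA S (2 * x) = (2 * i).-1)
        <-> (forall d, 0 < d -> odd d -> exists! r, S r /\ cardA S r = d)),
      ((forall d, 0 < d -> odd d -> exists! r, S r /\ cardA S r = d)
        <-> Arf S) &
      ((forall i x, 0 < i -> is_rho S i x -> cardA S (2 * x) = (2 * i).-1)
        <-> Arf S)].
Proof.
have e1 := A_iff S; have e2 := A'_iff S; have e3 := arf_iff S; have e4 := @B_iff S HS.
rewrite /A_prop /B_prop in e1 e4.
split; tauto.
Qed.
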